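(* For every $M\in\mathrm{Mat}_3(\mathbb C)$, the matrix $$L(M)=\sum_{i=1}^d I_3^{\otimes (i-1)}\otimes M\otimes I_3^{\otimes(d-i)}$$ lies in $\mathcal T$ (under the identification $\mathrm{Mat}_X(\mathbb C)=\mathrm{Mat}_3(\mathbb C)^{\otimes d}$ below).
   Context: Let $d\ge1$, $\mathbb F_3=\{0,1,2\}$ and $X=\mathbb F_3^d$. The Hamming digraph $H^*(d,3)$ has vertex set $X$, with an arc from $y$ to $z$ iff $y$ and $z$ differ in exactly one coordinate $i$ and $z_i=y_i+1$ in $\mathbb F_3$. Let $V=\mathbb C^X$ with basis $\{\hat y\}$. The adjacency matrix $A\in\mathrm{Mat}_X(\mathbb C)$ has $(y,z)$-entry $1$ iff there is an arc from $y$ to $z$. For integers $s,t$, $E^*_{[s,t]}$ is the diagonal matrix whose $(y,y)$-entry is $1$ if $y$ has exactly $s$ ones and $t$ twos, and $0$ otherwise. The Terwilliger algebra $\mathcal T$ is the subalgebra of $\mathrm{Mat}_X(\mathbb C)$ generated by $A$, $A^\top$ and all $E^*_{[s,t]}$. With $e_0,e_1,e_2$ the standard basis of $\mathbb C^3$, identify $V$ with $(\mathbb C^3)^{\otimes d}$ via $\hat y\mapsto e_{y_1}\otimes\cdots\otimes e_{y_d}$, and hence $\mathrm{Mat}_X(\mathbb C)$ with $\mathrm{Mat}_3(\mathbb C)^{\otimes d}$. *)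

(* Defs.v *)
From HB Require Import structures.
From mathcomp Require Import all_boot all_order all_algebra.
From mathcomp Require Import complex.
From mathcomp Require Import Rstruct.
Import GRing.Theory Num.Theory.
Local Open Scope ring_scope.


(* X = F_3^d, vertices are functions 'I_d -> 'I_3 (coordinates 1..d are 0..d-1). *)
Definition X (d : nat) : finType := {ffun 'I_d -> 'I_3}.

Definition matX (d : nat) : Type := X d -> X d -> Rdefinitions.R[i].

Definition mx_add d (A B : matX d) : matX d := fun y z => A y z + B y z.
Definition mx_scale d (c : Rdefinitions.R[i]) (A : matX d) : matX d :=
  fun y z => c * A y z.
Definition mx_mul d (A B : matX d) : matX d :=
  fun y z => \sum_(w : X d) A y w * B w z.
Definition mx_id d : matX d := fun y z => (y == z)%:R.
Definition mx_tr d (A : matX d) : matX d := fun y z => A z y.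

Arguments mx_add {d}. Arguments mx_scale {d}. Arguments mx_mul {d}.
Arguments mx_tr {d}.

Definition arc d (y z : X d) : bool :=
  [exists i : 'I_d,
     [&& (nat_of_ord (z i) == (((y i).+1) %% 3)%N)
       & [forall j : 'I_d, (j != i) ==> (y j == z j)]]].

Arguments arc {d}.
Definition adjA d : matX d := fun y z => (arc y z)%:R.

(* E*_{[s,t]} : diagonal, (y,y)-entry 1 iff y has exactly s ones and t twos.
   (For negative s or t this is the zero matrix, which is in any subalgebra,
   so taking s t : nat loses nothing.) *)
Definition nones d (y : X d) : nat := #|[set i : 'I_d | nat_of_ord (y i) == 1%N]|.
Definition ntwos d (y : X d) : nat := #|[set i : 'I_d | nat_of_ord (y i) == 2%N]|.
Arguments nones {d}. Arguments ntwos {d}.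
Definition Estar d (s t : nat) : matX d :=
  fun y z => ((y == z) && (nones y == s) && (ntwos y == t))%:R.

Inductive inT (d : nat) : matX d -> Prop :=
  | inT_A : inT d (adjA d)
  | inT_At : inT d (mx_tr (adjA d))
  | inT_E : forall s t, inT d (Estar d s t)
  | inT_1 : inT d (mx_id d)
  | inT_add : forall A B, inT d A -> inT d B -> inT d (mx_add A B)
  | inT_scale : forall c A, inT d A -> inT d (mx_scale c A)
  | inT_mul : forall A B, inT d A -> inT d B -> inT d (mx_mul A B).

(* L(M) = sum_i I^{(i-1)} (x) M (x) I^{(d-i)}, written entrywise under
   hat y |-> e_{y_1} (x) ... (x) e_{y_d}:
   (y,z)-entry = sum_i M_{y_i z_i} * prod_{j <> i} [y_j = z_j]. *)
Definition Lmx d (M : 'M[Rdefinitions.R[i]]_3) : matX d :=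
  fun y z => \sum_(i : 'I_d)
     M (y i) (z i) * ([forall j : 'I_d, (j != i) ==> (y j == z j)])%:R.

(* Main.v *)
Require Import Defs.
From mathcomp Require Import all_boot all_algebra complex Rstruct.
From mathcomp Require Import ring.
From Stdlib Require Import FunctionalExtensionality.
Import GRing.Theory Num.Theory.
Local Open Scope ring_scope.


Arguments inT_add {d A B}. Arguments inT_mul {d A B}. Arguments inT_scale {d} c {A}.
Notation C := Rdefinitions.R[i].

Lemma inT_ext d (A B : matX d) : (forall y z, A y z = B y z) -> inT d A -> inT d B.
Proof.
move=> h; have ->: B = A; last by [].
by apply: functional_extensionality => y; apply: functional_extensionality => z; rewrite h.
Qed.

Lemma inT_zero d : inT d (fun _ _ => 0).
Proof. by apply: (inT_ext d (mx_scale 0 (mx_id d))) => [y z|]; [rewrite /mx_scale mul0r | apply: inT_scale; apply: inT_1]. Qed.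

Lemma inT_sum d (I : Type) (r : seq I) (F : I -> matX d) :
  (forall i, inT d (F i)) -> inT d (fun y z => \sum_(i <- r) F i y z).
Proof.
move=> h; elim: r => [|a r IH].
  by apply: (inT_ext d _ _ _ (inT_zero d)) => y z; rewrite big_nil.
by apply: (inT_ext d _ _ _ (inT_add (h a) IH)) => y z; rewrite big_cons.
Qed.

Lemma eqind d (y z : X d) i :
  ((y i == z i) && [forall j, (j != i) ==> (y j == z j)]) = (y == z).
Proof.
apply/idP/eqP.
  move=> /andP[/eqP h /forallP h2]; apply/ffunP => j.
  by case: (eqVneq j i) => [->//|n]; apply/eqP/(implyP (h2 j) n).
by move=> ->; rewrite eqxx; apply/forallP => j; apply/implyP.
Qed.

Definition diagm (δ : 'I_3 -> C) : 'M[C]_3 := \matrix_(a, b) ((a == b)%:R * δ a).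
Definition Dg d (δ : 'I_3 -> C) : matX d := fun y z => (y == z)%:R * \sum_i δ (y i).

Lemma Lmx_diag d (δ : 'I_3 -> C) : Lmx d (diagm δ) = Dg d δ.
Proof.
apply: functional_extensionality => y; apply: functional_extensionality => z.
rewrite /Lmx /Dg mulr_sumr; apply: eq_bigr => i _; rewrite mxE.
by rewrite -(eqind _ y z i) -mulnb natrM; ring.
Qed.

Lemma mul_Dg_l d (δ : 'I_3 -> C) (B : matX d) y z : mx_mul (Dg d δ) B y z = (\sum_i δ (y i)) * B y z.
Proof.
rewrite /mx_mul (bigD1 y) //= big1 ?addr0 => [|w nw]; rewrite /Dg ?eqxx ?mul1r //.
by rewrite eq_sym (negbTE nw) !mul0r.
Qed.

Lemma mul_Dg_r d (δ : 'I_3 -> C) (B : matX d) y z : mx_mul B (Dg d δ) y z = B y z * (\sum_i δ (z i)).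
Proof.
rewrite /mx_mul (bigD1 z) //= big1 ?addr0 => [|w nw]; rewrite /Dg ?eqxx ?mul1r //.
by rewrite (negbTE nw) !mul0r mulr0.
Qed.

Definition opm (δ : 'I_3 -> C) (N : 'M[C]_3) : 'M[C]_3 := \matrix_(a, b) ((δ a - δ b) * N a b).

Lemma comm_Lmx d (δ : 'I_3 -> C) (N : 'M[C]_3) (y z : X d) :
  (\sum_i δ (y i)) * Lmx d N y z - Lmx d N y z * (\sum_i δ (z i)) = Lmx d (opm δ N) y z.
Proof.
rewrite [Lmx d N y z * _]mulrC -mulrBl /Lmx mulr_sumr; apply: eq_bigr => i _.
rewrite mxE; case: (boolP [forall j, _]) => h; last by rewrite !mulr0.
rewrite (bigD1 i) //= [\sum_i δ (z i)](bigD1 i) //=.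
have ->: \sum_(j | j != i) δ (z j) = \sum_(j | j != i) δ (y j).
  by apply: eq_bigr => j ji; move/forallP: h => /(_ j); rewrite ji => /eqP ->.
rewrite opprD addrACA subrr addr0; ring.
Qed.

Lemma op_T d (δ : 'I_3 -> C) (N : 'M[C]_3) : inT d (Lmx d (diagm δ)) -> inT d (Lmx d N) -> inT d (Lmx d (opm δ N)).
Proof.
move=> hD hN; apply: (inT_ext d _ _ _ (inT_add (inT_mul hD hN) (inT_scale (-1) (inT_mul hN hD)))).
move=> y z; rewrite -comm_Lmx /mx_add /mx_scale Lmx_diag mul_Dg_l mul_Dg_r.
by rewrite mulN1r.
Qed.

Lemma Lmx_add d (M N : 'M[C]_3) (y z : X d) : Lmx d (M + N) y z = Lmx d M y z + Lmx d N y z.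
Proof. by rewrite /Lmx -big_split; apply: eq_bigr => i _; rewrite mxE mulrDl. Qed.

Lemma Lmx_scale d (c : C) (M : 'M[C]_3) (y z : X d) : Lmx d (c *: M) y z = c * Lmx d M y z.
Proof. by rewrite /Lmx mulr_sumr; apply: eq_bigr => i _; rewrite mxE mulrA. Qed.

Lemma S_add d (M N : 'M[C]_3) : inT d (Lmx d M) -> inT d (Lmx d N) -> inT d (Lmx d (M + N)).
Proof. by move=> h1 h2; apply: (inT_ext d _ _ _ (inT_add h1 h2)) => y z; rewrite Lmx_add. Qed.

Lemma S_scale d (c : C) (M : 'M[C]_3) : inT d (Lmx d M) -> inT d (Lmx d (c *: M)).
Proof. by move=> h1; apply: (inT_ext d _ _ _ (inT_scale c h1)) => y z; rewrite Lmx_scale. Qed.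

Lemma S_zero d : inT d (Lmx d 0).
Proof.
apply: (inT_ext d _ _ _ (inT_zero d)) => y z; rewrite /Lmx big1 // => i _; by rewrite mxE mul0r.
Qed.

Arguments op_T {d δ N}. Arguments S_add {d M N}. Arguments S_scale {d} c {M}.

Lemma S_filter d (a : 'I_3) (Q : 'M[C]_3) : inT d (Lmx d (diagm (fun b => (b == a)%:R))) -> inT d (Lmx d Q) ->
  inT d (Lmx d (\matrix_(b, e) (((b == a) && (e != a))%:R * Q b e))).
Proof.
move=> hD hQ.
have h := S_scale (2^-1 : C) (S_add (op_T hD hQ) (op_T hD (op_T hD hQ))).
have ->: \matrix_(b, e) (((b == a) && (e != a))%:R * Q b e) =
  (2^-1 : C) *: (opm (fun b => (b == a)%:R) Q + opm (fun b => (b == a)%:R) (opm (fun b => (b == a)%:R) Q)).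
  apply/matrixP => b e; rewrite !mxE.
  by case: (b == a); case: (e == a) => /=; field.
exact: h.
Qed.

Lemma sum_ind (n m : nat) (F : nat -> C) : (m < n)%N ->
  \sum_(s < n) F s * (m == s)%:R = F m.
Proof.
move=> hm; rewrite (bigD1 (Ordinal hm)) //= eqxx mulr1 big1 ?addr0 // => s ns.
rewrite (_ : (m == s) = false) ?mulr0 //; apply/negbTE; apply: contra ns => /eqP e.
by apply/eqP/val_inj.
Qed.

Lemma card_lt d (P : pred 'I_d) : (#|[set i | P i]| < d.+1)%N.
Proof. by rewrite ltnS -[X in (_ <= X)%N](card_ord d) max_card. Qed.

Lemma inT_diagG d (G : nat -> nat -> C) :
  inT d (fun y z => (y == z)%:R * G (nones y) (ntwos y)).
Proof.
apply: (inT_ext d (fun y z => \sum_(s < d.+1) \sum_(t < d.+1) G s t * Estar d s t y z)).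
  move=> y z.
  have n1 : (nones y < d.+1)%N by exact: card_lt.
  have n2 : (ntwos y < d.+1)%N by exact: card_lt.
  rewrite (eq_bigr (fun s : 'I_d.+1 => G s (ntwos y) * ((y == z) && (nones y == s))%:R)); last first.
    move=> s _; rewrite (eq_bigr (fun t : 'I_d.+1 => (G s t * ((y == z) && (nones y == s))%:R) * (ntwos y == t)%:R)).
      by rewrite (sum_ind _ _ (fun t => G s t * ((y == z) && (nones y == s))%:R)).
    by move=> t _; rewrite /Estar -mulnb natrM mulrA.
  rewrite (eq_bigr (fun s : 'I_d.+1 => (G s (ntwos y) * (y == z)%:R) * (nones y == s)%:R)).
    by rewrite (sum_ind _ _ (fun s => G s (ntwos y) * (y == z)%:R)) // mulrC.
  by move=> s _; rewrite -mulnb natrM mulrA.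
apply: inT_sum => s; apply: inT_sum => t; apply: inT_scale; exact: inT_E.
Qed.

Lemma sum_card d (P : pred 'I_d) : \sum_i (P i)%:R = (#|[set i | P i]|)%:R :> C.
Proof.
rewrite -natr_sum; congr (_%:R); rewrite -sum1_card [RHS]big_mkcond /=.
by apply: eq_bigr => i _; rewrite inE; case: (P i).
Qed.

Lemma diag_T d (a : 'I_3) : inT d (Lmx d (diagm (fun b => (b == a)%:R))).
Proof.
rewrite Lmx_diag.
case: a => [[|[|[|//]]] ha].
- apply: (inT_ext d _ _ _ (inT_diagG d (fun s t => d%:R - s%:R - t%:R))) => y z.
  rewrite /Dg; congr (_ * _).
  have -> : (d%:R : C) = \sum_(i : 'I_d) 1 by rewrite sumr_const card_ord.
  rewrite /nones /ntwos -!sum_card -!sumrB.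
  by apply: eq_bigr => i _; rewrite -val_eqE /=; case: (y i) => [[|[|[|//]]] ?] /=; by rewrite ?subr0 ?subrr ?sub0r ?opprK; ring.
- apply: (inT_ext d _ _ _ (inT_diagG d (fun s t => s%:R))) => y z.
  by rewrite /Dg /nones -sum_card.
- apply: (inT_ext d _ _ _ (inT_diagG d (fun s t => t%:R))) => y z.
  by rewrite /Dg /ntwos -sum_card.
Qed.
Definition Pm : 'M[C]_3 :=
  \matrix_(b, c) ((nat_of_ord c == ((nat_of_ord b).+1 %% 3)%N))%:R.

Lemma sum_unique d (P : pred 'I_d) : (forall i j, P i -> P j -> i = j) ->
  \sum_i (P i)%:R = ([exists i, P i])%:R :> C.
Proof.
move=> u; case: (boolP [exists i, P i]) => [/existsP [i Pi]|/existsPn nP].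
  rewrite (bigD1 i) //= Pi big1 ?addr0 // => j nj; case Pj: (P j) => //.
  by rewrite (u _ _ Pi Pj) eqxx in nj.
by rewrite big1 // => i _; rewrite (negbTE (nP i)).
Qed.

Lemma adj_Lmx d : adjA d = Lmx d Pm.
Proof.
apply: functional_extensionality => y; apply: functional_extensionality => z.
rewrite /adjA /Lmx /arc.
rewrite (eq_bigr (fun i => ((nat_of_ord (z i) == ((y i).+1 %% 3)%N) &&
   [forall j, (j != i) ==> (y j == z j)])%:R)); last by move=> i _; rewrite mxE -natrM mulnb.
rewrite sum_unique // => i j /andP[hi _] /andP[hj /forallP fj].
apply/eqP; apply: contraT => nij.
have := fj i; rewrite nij /= => /eqP e.
move: hi; rewrite e; case: (z i) => [[|[|[|//]]] ?] //.
Qed.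

Lemma tr_Lmx d N : mx_tr (Lmx d N) = Lmx d N^T.
Proof.
apply: functional_extensionality => y; apply: functional_extensionality => z.
rewrite /mx_tr /Lmx; apply: eq_bigr => i _; rewrite mxE; congr (_ * (_ %:R)).
congr (nat_of_bool _); apply: eq_forallb => j; by rewrite [_ == _ :> 'I_3]eq_sym.
Qed.

Lemma S_delta d (a c : 'I_3) : inT d (Lmx d (delta_mx a c)).
Proof.
case: (eqVneq a c) => [<-|nac].
  have ->: delta_mx a a = diagm (fun b => (b == a)%:R) :> 'M[C]_3.
    apply/matrixP => b e; rewrite !mxE -natrM mulnb; congr (_%:R).
    by case: (eqVneq b a) => [->|nb]; rewrite ?eqxx ?andbT ?andbF ?(negbTE nb) // eq_sym.
  exact: diag_T.
have key : (nat_of_ord c == ((nat_of_ord a).+1 %% 3)%N) || (nat_of_ord a == ((nat_of_ord c).+1 %% 3)%N).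
  by move: a c nac; do 2! case=> [[|[|[|//]]] ?].
case/orP: key => h.
  have ->: delta_mx a c = \matrix_(b, e) (((b == a) && (e != a))%:R * Pm b e) :> 'M[C]_3.
    apply/matrixP => b e; rewrite !mxE -natrM mulnb; congr (_%:R).
    by move: a b c e h {nac}; do 4! case=> [[|[|[|//]]] ?].
  apply: S_filter; first exact: diag_T.
  rewrite -adj_Lmx; exact: inT_A.
have ->: delta_mx a c = \matrix_(b, e) (((b == a) && (e != a))%:R * Pm^T b e) :> 'M[C]_3.
  apply/matrixP => b e; rewrite !mxE -natrM mulnb; congr (_%:R).
  by move: a b c e h {nac}; do 4! case=> [[|[|[|//]]] ?].
apply: S_filter; first exact: diag_T.
rewrite -tr_Lmx -adj_Lmx; exact: inT_At.
Qed.

Theorem lemma5p4 (d : nat) (hd : (1 <= d)%N) (M : 'M[Rdefinitions.R[i]]_3) :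
  inT d (Lmx d M).
Proof.
rewrite (matrix_sum_delta M).
apply: (big_ind (fun N => inT d (Lmx d N))); [exact: S_zero|move=> x y hx hy; exact: (S_add hx hy)|move=> a _].
apply: (big_ind (fun N => inT d (Lmx d N))); [exact: S_zero|move=> x y hx hy; exact: (S_add hx hy)|move=> c _].
apply: S_scale; exact: S_delta.
Qed.
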